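(* (1) Every affine functional $a:\mathrm{Latt}^1_{o_D}(V)\to\mathbb R$ which is invariant under the action of $k^\times$ (i.e. $a(c\Lambda)=a(\Lambda)$ for all $c\in k^\times$, where $(c\Lambda)(r)=c\Lambda(r)$) is constant. (2) Every $k^\times$-invariant affine functional on the enlarged Bruhat–Tits building of the split isotropic orthogonal group $O^{is}_{2,k}$ (identified with $\mathrm{Latt}^1_{o_k}(k)\cong\mathbb R$, on which $k^\times$ acts by scalar multiplication) is constant.
   Context: $k$ is a non-Archimedean local field with discrete valuation $\nu$ (residue characteristic different from $2$), $D$ a finite-dimensional central division $k$-algebra, $\nu$ extended to $D$, $V$ a finite-dimensional right $D$-space. An $o_D$-lattice function is a map $\Lambda$ from $\mathbb R$ to full $o_D$-lattices of $V$ with $\Lambda(r+\nu(\pi_D))=\Lambda(r)\pi_D$, decreasing, left continuous; $\mathrm{Latt}^1_{o_D}(V)$ is their set (a model of the enlarged building of $GL_D(V)$). Affine structure: for $\Lambda,\Lambda'$ with common splitting basis $(v_i)$, $\Lambda(x)=\bigoplus v_i\{\delta:\nu(\delta)\ge x-\alpha_i\}$, $\Lambda'(x)=\bigoplus v_i\{\delta:\nu(\delta)\ge x-\alpha'_i\}$, $t\Lambda+(1-t)\Lambda'$ corresponds to $t\alpha_i+(1-t)\alpha'_i$ ($t\in[0,1]$). An affine functional $a$ satisfies $a(tx+(1-t)y)=ta(x)+(1-t)a(y)$. *)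

(* Defs.v *)
From HB Require Import structures.
From mathcomp Require Import all_boot all_order all_algebra.
From mathcomp Require Import falgebra.
From mathcomp Require Import Rstruct.
Set Implicit Arguments.
Unset Strict Implicit.
Unset Printing Implicit Defensive.
Import Order.TTheory GRing.Theory Num.Theory.
Local Open Scope ring_scope.

Notation RR := Rdefinitions.R.

Section Defs.

(* "d has valuation >= r", with the convention nu(0) = +oo *)
Definition vge (A : nzRingType) (nu : A -> RR) (r : RR) (d : A) : Prop :=
  d = 0 \/ r <= nu d.

(* nu (defined on nonzero elements) is a valuation *)
Definition valuation (A : nzRingType) (nu : A -> RR) : Prop :=
  (forall x y : A, x != 0 -> y != 0 -> nu (x * y) = nu x + nu y) /\
  (forall x y : A, x != 0 -> y != 0 -> x + y != 0 ->
      Num.min (nu x) (nu y) <= nu (x + y)).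

Definition discrete_valuation (k : fieldType) (nu : k -> RR) : Prop :=
  valuation nu /\
  exists e : RR, 0 < e /\
    (forall x : k, x != 0 -> exists z : int, nu x = z%:~R * e) /\
    (exists x : k, x != 0 /\ nu x = e).

Definition nu_complete (k : fieldType) (nu : k -> RR) : Prop :=
  forall u : nat -> k,
    (forall M : RR, exists N : nat, forall m n : nat,
        (N <= m)%N -> (N <= n)%N -> vge nu M (u m - u n)) ->
    exists l : k, forall M : RR, exists N : nat, forall n : nat,
        (N <= n)%N -> vge nu M (u n - l).

Definition finite_residue_field (k : fieldType) (nu : k -> RR) : Prop :=
  exists s : seq k, (forall y, y \in s -> vge nu 0 y) /\
    forall x : k, vge nu 0 x -> exists2 y, y \in s & (x - y = 0 \/ 0 < nu (x - y)).

Definition nonarch_local_field (k : fieldType) (nu : k -> RR) : Prop :=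
  [/\ discrete_valuation nu, nu_complete nu & finite_residue_field nu].

Definition residue_char_not2 (k : fieldType) (nu : k -> RR) : Prop :=
  (2%:R : k) != 0 /\ nu 2%:R = 0.

Definition uniformizer (A : nzRingType) (nu : A -> RR) (p : A) : Prop :=
  [/\ p != 0, 0 < nu p & forall x : A, x != 0 -> 0 < nu x -> nu p <= nu x].

Definition right_module (A : nzRingType) (V : zmodType) (act : V -> A -> V) : Prop :=
  [/\ (forall v w d, act (v + w) d = act v d + act w d),
      (forall v d e, act v (d + e) = act v d + act v e),
      (forall v d e, act v (d * e) = act (act v d) e) &
      (forall v, act v 1 = v)].

Definition lcomb (A : nzRingType) (V : zmodType) (act : V -> A -> V)
  (n : nat) (g : 'I_n -> V) (d : 'I_n -> A) : V :=
  \sum_(i < n) act (g i) (d i).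

Definition is_basis (A : nzRingType) (V : zmodType) (act : V -> A -> V)
  (n : nat) (b : 'I_n -> V) : Prop :=
  (forall v, exists d, v = lcomb act b d) /\
  (forall d, lcomb act b d = 0 -> forall i, d i = 0).

Definition finite_dim (A : nzRingType) (V : zmodType) (act : V -> A -> V) : Prop :=
  exists n (b : 'I_n -> V), is_basis act b.

(* full o_A-lattice in V (o_A = {d | nu d >= 0}): a finitely generated
   o_A-submodule of V whose A-span is V *)
Definition full_lattice (A : nzRingType) (nu : A -> RR) (V : zmodType)
  (act : V -> A -> V) (L : V -> Prop) : Prop :=
  exists m (g : 'I_m -> V),
    (forall v, L v <-> exists a : 'I_m -> A,
          (forall i, vge nu 0 (a i)) /\ v = lcomb act g a) /\
    (forall v, exists d, v = lcomb act g d).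

Definition lattice_fun (A : nzRingType) (nu : A -> RR) (pi : A) (V : zmodType)
  (act : V -> A -> V) (Lam : RR -> V -> Prop) : Prop :=
  [/\ (forall r, full_lattice nu act (Lam r)),
      (forall r v, Lam (r + nu pi) v <-> exists w, Lam r w /\ v = act w pi),
      (forall r s, r <= s -> forall v, Lam s v -> Lam r v) &
      (forall r v, (forall s, s < r -> Lam s v) -> Lam r v)].

Definition scal_fun (A : nzRingType) (V : zmodType) (act : V -> A -> V)
  (c : A) (Lam : RR -> V -> Prop) : RR -> V -> Prop :=
  fun r v => exists w, Lam r w /\ v = act w c.

Definition split_fun (A : nzRingType) (nu : A -> RR) (V : zmodType)
  (act : V -> A -> V) (n : nat) (b : 'I_n -> V) (alpha : 'I_n -> RR)
  : RR -> V -> Prop :=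
  fun x v => exists d : 'I_n -> A,
      (forall i, vge nu (x - alpha i) (d i)) /\ v = lcomb act b d.

Definition splits (A : nzRingType) (nu : A -> RR) (V : zmodType)
  (act : V -> A -> V) (Lam : RR -> V -> Prop) (n : nat) (b : 'I_n -> V)
  (alpha : 'I_n -> RR) : Prop :=
  forall x v, Lam x v <-> split_fun nu act b alpha x v.

(* affine functional on Latt^1: for any two lattice functions with a common
   splitting basis, a(t Lam + (1-t) Lam') = t a(Lam) + (1-t) a(Lam') *)
Definition affine_functional (A : nzRingType) (nu : A -> RR) (pi : A)
  (V : zmodType) (act : V -> A -> V) (a : (RR -> V -> Prop) -> RR) : Prop :=
  forall (Lam Lam' : RR -> V -> Prop) (n : nat) (b : 'I_n -> V)
         (alpha alpha' : 'I_n -> RR) (t : RR),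
    lattice_fun nu pi act Lam -> lattice_fun nu pi act Lam' ->
    is_basis act b -> splits nu act Lam b alpha -> splits nu act Lam' b alpha' ->
    0 <= t <= 1 ->
    a (split_fun nu act b (fun i => t * alpha i + (1 - t) * alpha' i))
      = t * a Lam + (1 - t) * a Lam'.

End Defs.

(* Main.v *)
Require Import Defs.
From HB Require Import structures.
From mathcomp Require Import all_boot all_order all_algebra.
From mathcomp Require Import falgebra.
From mathcomp Require Import Rstruct lra ring.
From Stdlib Require Raxioms.
From Stdlib Require Import Classical ClassicalEpsilon FunctionalExtensionality PropExtensionality.
Import Order.TTheory GRing.Theory Num.Theory.
Set Implicit Arguments.
Unset Strict Implicit.
Unset Printing Implicit Defensive.
Local Open Scope ring_scope.


Section Val.
Variables (D : unitRingType) (nu : D -> RR) (hnu : valuation nu)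
  (hdiv : forall x : D, x != 0 -> x \is a GRing.unit).

Lemma mulD_neq0 (x y : D) : x != 0 -> y != 0 -> x * y != 0.
Proof.
move=> hx hy; apply/eqP=> h; move/eqP: hy; apply.
by rewrite -(mulKr (hdiv hx) y) h mulr0.
Qed.

Lemma nuM (x y : D) : x != 0 -> y != 0 -> nu (x * y) = nu x + nu y.
Proof. exact: hnu.1. Qed.

Lemma nu1 : nu 1 = 0.
Proof. have := nuM (oner_neq0 D) (oner_neq0 D); rewrite mulr1 => h; lra. Qed.

Lemma nuN1 : nu (-1) = 0.
Proof.
have h1 : (-1 : D) != 0 by rewrite oppr_eq0 oner_neq0.
have := nuM h1 h1; rewrite mulrNN mulr1 nu1 => h; lra.
Qed.

Lemma nuN (x : D) : nu (- x) = nu x.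
Proof.
have [->|hx] := eqVneq x 0; first by rewrite oppr0.
have h1 : (-1 : D) != 0 by rewrite oppr_eq0 oner_neq0.
by rewrite -mulN1r nuM // nuN1 add0r.
Qed.

Lemma invD_neq0 (x : D) : x != 0 -> x^-1 != 0.
Proof. by move=> hx; rewrite invr_eq0. Qed.

Lemma nuV (x : D) : x != 0 -> nu (x^-1) = - nu x.
Proof.
move=> hx; have := nuM (invD_neq0 hx) hx; rewrite mulVr ?hdiv // nu1 => h; lra.
Qed.

Lemma vge0 r : vge nu r 0. Proof. by left. Qed.

Lemma vge_nz r (x : D) : x != 0 -> vge nu r x <-> r <= nu x.
Proof.
move=> hx; split; last by right.
by case=> // h; move: hx; rewrite h eqxx.
Qed.

Lemma vge_le r s (x : D) : s <= r -> vge nu r x -> vge nu s x.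
Proof. by move=> hsr [->|h]; [left|right; apply: le_trans h]. Qed.

Lemma vgeN r (x : D) : vge nu r x -> vge nu r (- x).
Proof. by case=> [->|h]; [left; rewrite oppr0|right; rewrite nuN]. Qed.

Lemma vgeN_iff r (x : D) : vge nu r (- x) <-> vge nu r x.
Proof. by split=> /vgeN //; rewrite opprK. Qed.

Lemma vgeD r (x y : D) : vge nu r x -> vge nu r y -> vge nu r (x + y).
Proof.
case=> [->|hx]; first by rewrite add0r.
case=> [->|hy]; first by rewrite addr0; right.
have [->|hs] := eqVneq (x + y) 0; first by left.
right.
have [x0|xn] := eqVneq x 0; first by rewrite x0 add0r.
have [y0|yn] := eqVneq y 0; first by rewrite y0 addr0.
apply: le_trans (hnu.2 x y xn yn hs).
by rewrite le_min hx hy.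
Qed.

Lemma vgeB r (x y : D) : vge nu r x -> vge nu r y -> vge nu r (x - y).
Proof. by move=> hx hy; apply: vgeD => //; apply: vgeN. Qed.

Lemma vgeM r s (x y : D) : vge nu r x -> vge nu s y -> vge nu (r + s) (x * y).
Proof.
case=> [->|hx]; first by rewrite mul0r; left.
case=> [->|hy]; first by rewrite mulr0; left.
have [x0|xn] := eqVneq x 0; first by rewrite x0 mul0r; left.
have [y0|yn] := eqVneq y 0; first by rewrite y0 mulr0; left.
right; rewrite nuM //; exact: lerD.
Qed.

Lemma vge_all (x : D) : (forall r, vge nu r x) -> x = 0.
Proof.
move=> h; have [//|hx] := eqVneq x 0.
have := h (nu x + 1); case=> [h0|hle]; [by move: hx; rewrite h0 eqxx|exfalso; move: hle; lra].
Qed.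

Variables (p : D) (hp : uniformizer nu p).

Lemma p_neq0 : p != 0. Proof. by case: hp. Qed.
Lemma nup_gt0 : 0 < nu p. Proof. by case: hp. Qed.

Lemma pexp_neq0 (n : nat) : p ^+ n != 0.
Proof. elim: n => [|n ih]; rewrite ?expr0 ?oner_neq0 // exprS mulD_neq0 //; exact: p_neq0. Qed.

Lemma nu_pexp (n : nat) : nu (p ^+ n) = n%:R * nu p.
Proof.
elim: n => [|n ih]; first by rewrite expr0 nu1 mul0r.
rewrite exprS nuM ?p_neq0 ?pexp_neq0 // ih -nat1r mulrDl mul1r //.
Qed.

Definition pz (z : int) : D := p ^ z.

Lemma pz_neq0 z : pz z != 0.
Proof.
case: z => n; rewrite /pz.
  by rewrite -exprnP pexp_neq0.
by rewrite NegzE -exprnN invr_eq0 pexp_neq0.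
Qed.

Lemma nu_pz z : nu (pz z) = z%:~R * nu p.
Proof.
case: z => n; rewrite /pz.
  by rewrite -exprnP nu_pexp.
rewrite NegzE -exprnN nuV ?pexp_neq0 // nu_pexp.
by rewrite -mulNr; congr (_ * _); rewrite intrN.
Qed.

Lemma pz_unit z : pz z \is a GRing.unit.
Proof. exact: hdiv (pz_neq0 z). Qed.

Lemma p_unit : p \is a GRing.unit.
Proof. exact: hdiv p_neq0. Qed.

Lemma pzN z : pz (- z) = (pz z)^-1.
Proof. by rewrite /pz invr_expz. Qed.

Lemma pzD z w : pz (z + w) = pz z * pz w.
Proof. by rewrite /pz exprzDr // p_unit. Qed.

Lemma pz1 : pz 1 = p. Proof. by rewrite /pz expr1z. Qed.

Lemma nu_mult (x : D) : x != 0 -> exists z : int, nu x = z%:~R * nu p.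
Proof.
move=> hx; set e := nu p; have e0 : 0 < e by exact: nup_gt0.
set z := Num.floor (nu x / e); exists z.
have hy : x * pz (- z) != 0 by apply: mulD_neq0 => //; exact: pz_neq0.
have nuy : nu (x * pz (- z)) = nu x - z%:~R * e.
  by rewrite nuM ?pz_neq0 // nu_pz intrN mulNr.
have hq : nu x = (nu x / e) * e by rewrite divfK // gt_eqF.
have f1 := Num.Theory.floor_le (nu x / e).
have f2 := Num.Theory.floorD1_gt (nu x / e).
rewrite intrD -/z in f2.
have lo : z%:~R * e <= nu x.
  by rewrite [X in _ <= X]hq ler_pM2r.
have hi : nu x < (z%:~R + 1) * e.
  by rewrite [X in X < _]hq ltr_pM2r.
case: (ltP 0 (nu (x * pz (- z)))) => h.
  case: hp => _ _ /(_ _ hy h); rewrite nuy -/e => h'.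
  exfalso; move: h' hi; rewrite mulrDl mul1r; lra.
apply/eqP; rewrite eq_le lo andbT.
by move: h; rewrite nuy subr_le0.
Qed.

Definition zc r := Num.ceil (r / nu p).

Lemma ceil_mult r : r <= (zc r)%:~R * nu p /\
  forall x, x != 0 -> r <= nu x -> (zc r)%:~R * nu p <= nu x.
Proof.
set e := nu p; have e0 : 0 < e by exact: nup_gt0.
rewrite /zc -/e; set z := Num.ceil (r / e); split.
  have := Num.Theory.ceil_ge (r / e); rewrite -/z => h.
  by rewrite -ler_pdivrMr.
move=> x hx hr; have [w hw] := nu_mult hx; rewrite hw -/e ler_pM2r //.
rewrite ler_int /z Num.Theory.ceil_le_int ler_pdivrMr //.
by rewrite -hw.
Qed.

Lemma pzK z d : pz z * (pz (- z) * d) = d.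
Proof. by rewrite mulrA -pzD subrr /pz expr0z mul1r. Qed.

Lemma vge_pz_fwd r d : vge nu r d -> vge nu 0 (pz (- zc r) * d).
Proof.
have [hr hmin] := ceil_mult r; set z := zc r.
case=> [->|hd]; first by rewrite mulr0; left.
have [d0|dn] := eqVneq d 0; first by rewrite d0 mulr0; left.
right; rewrite nuM ?pz_neq0 // nu_pz intrN mulNr.
have := hmin d dn hd; lra.
Qed.

Lemma vge_pz_bwd r a : vge nu 0 a -> vge nu r (pz (zc r) * a).
Proof.
have [hr hmin] := ceil_mult r => ha; apply: vge_le hr _.
rewrite -[X in vge _ X _]addr0; apply: vgeM => //.
by right; rewrite nu_pz.
Qed.

Lemma vge_pz r z : r <= z%:~R * nu p ->
  (forall x, x != 0 -> r <= nu x -> z%:~R * nu p <= nu x) ->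
  forall d, vge nu r d <-> exists a, vge nu 0 a /\ d = pz z * a.
Proof.
move=> hr hmin d; split.
  case=> [->|hd]; first by exists 0; split; [left|rewrite mulr0].
  have [d0|dn] := eqVneq d 0; first by exists 0; split; [left|rewrite d0 mulr0].
  exists (pz (- z) * d); split; last by rewrite mulrA -pzD subrr /pz expr0z mul1r.
  right; rewrite nuM ?pz_neq0 // nu_pz intrN mulNr.
  have := hmin d dn hd; lra.
case=> a [ha ->]; apply: vge_le hr _.
rewrite -[X in vge _ X _]addr0; apply: vgeM => //.
by right; rewrite nu_pz.
Qed.

End Val.


Section Mod.
Variables (D : nzRingType) (V : zmodType) (act : V -> D -> V)
  (hV : right_module act).

Lemma actDl v w d : act (v + w) d = act v d + act w d. Proof. by case: hV. Qed.
Lemma actDr v d e : act v (d + e) = act v d + act v e. Proof. by case: hV. Qed.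
Lemma actM v d e : act v (d * e) = act (act v d) e. Proof. by case: hV. Qed.
Lemma act1 v : act v 1 = v. Proof. by case: hV. Qed.

Lemma act0r v : act v 0 = 0.
Proof. have h := actDr v 0 0; rewrite addr0 in h; apply: (addrI (act v 0)); by rewrite -h addr0. Qed.

Lemma act0l d : act 0 d = 0.
Proof. have h := actDl 0 0 d; rewrite addr0 in h; apply: (addrI (act 0 d)); by rewrite -h addr0. Qed.

Lemma actNr v d : act v (- d) = - act v d.
Proof. by apply/eqP; rewrite -addr_eq0 -actDr addNr act0r. Qed.

Lemma actNl v d : act (- v) d = - act v d.
Proof. by apply/eqP; rewrite -addr_eq0 -actDl addNr act0l. Qed.

Lemma actBr v d e : act v (d - e) = act v d - act v e.
Proof. by rewrite actDr actNr. Qed.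

Lemma actBl v w d : act (v - w) d = act v d - act w d.
Proof. by rewrite actDl actNl. Qed.

Lemma act_suml (I : Type) (r : seq I) (P : pred I) (F : I -> V) d :
  act (\sum_(i <- r | P i) F i) d = \sum_(i <- r | P i) act (F i) d.
Proof.
elim: r => [|x r ih]; first by rewrite !big_nil act0l.
by rewrite !big_cons; case: (P x); rewrite ?actDl ih.
Qed.

Lemma act_sumr v (I : Type) (r : seq I) (P : pred I) (F : I -> D) :
  act v (\sum_(i <- r | P i) F i) = \sum_(i <- r | P i) act v (F i).
Proof.
elim: r => [|x r ih]; first by rewrite !big_nil act0r.
by rewrite !big_cons; case: (P x); rewrite ?actDr ih.
Qed.

Variables (n : nat) (b : 'I_n -> V).

Lemma lcombD (d e : 'I_n -> D) :
  lcomb act b (fun i => d i + e i) = lcomb act b d + lcomb act b e.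
Proof. by rewrite /lcomb -big_split; apply: eq_bigr => i _; rewrite actDr. Qed.

Lemma lcomb0 : lcomb act b (fun _ => 0) = 0.
Proof. by rewrite /lcomb big1 // => i _; rewrite act0r. Qed.

Lemma lcombN (d : 'I_n -> D) : lcomb act b (fun i => - d i) = - lcomb act b d.
Proof. by rewrite /lcomb -sumrN; apply: eq_bigr => i _; rewrite actNr. Qed.

Lemma lcombB (d e : 'I_n -> D) :
  lcomb act b (fun i => d i - e i) = lcomb act b d - lcomb act b e.
Proof. by rewrite (lcombD d (fun i => - e i)) lcombN. Qed.

Lemma lcomb_act (d : 'I_n -> D) c :
  act (lcomb act b d) c = lcomb act b (fun i => d i * c).
Proof. by rewrite /lcomb act_suml; apply: eq_bigr => i _; rewrite actM. Qed.

Lemma lcomb_ext (d e : 'I_n -> D) : d =1 e -> lcomb act b d = lcomb act b e.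
Proof. by move=> h; rewrite /lcomb; apply: eq_bigr => i _; rewrite h. Qed.

Definition indep := forall d, lcomb act b d = 0 -> forall i, d i = 0.

Lemma indep_inj : indep -> forall d e, lcomb act b d = lcomb act b e -> d =1 e.
Proof.
move=> hi d e h i; apply/eqP; rewrite -subr_eq0; apply/eqP.
by apply: (hi (fun i => d i - e i)); rewrite lcombB h subrr.
Qed.

Lemma basis_indep : is_basis act b -> indep. Proof. by case. Qed.

End Mod.


Section Split.
Variables (D : unitRingType) (nu : D -> RR) (hnu : valuation nu)
  (hdiv : forall x : D, x != 0 -> x \is a GRing.unit)
  (p : D) (hp : uniformizer nu p)
  (V : zmodType) (act : V -> D -> V) (hV : right_module act).

Lemma vge_left r (x : D) : (forall s, s < r -> vge nu s x) -> vge nu r x.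
Proof.
move=> h; have [->|hx] := eqVneq x 0; first by left.
right; case: (leP r (nu x)) => // hlt.
have h2 : (r + nu x) / 2 < r by lra.
case: (h _ h2) => [/eqP|h3]; first by rewrite (negbTE hx).
exfalso; lra.
Qed.

Variables (n : nat) (b : 'I_n -> V) (hb : is_basis act b).

Lemma split_lattice (alpha : 'I_n -> RR) :
  lattice_fun nu p act (split_fun nu act b alpha).
Proof.
have ind := basis_indep hb.
split.
- move=> r; exists n, (fun i => act (b i) (pz p (zc nu p (r - alpha i)))); split.
    move=> v; split.
      case=> d [hd ->].
      exists (fun i => pz p (- zc nu p (r - alpha i)) * d i); split.
        by move=> i; apply: vge_pz_fwd.
      rewrite /lcomb; apply: eq_bigr => i _; rewrite -(actM hV).
      by rewrite (pzK hdiv hp).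
    case=> a [ha ->]; exists (fun i => pz p (zc nu p (r - alpha i)) * a i); split.
      by move=> i; apply: vge_pz_bwd.
    by rewrite /lcomb; apply: eq_bigr => i _; rewrite (actM hV).
  move=> v; have [d ->] := hb.1 v.
  exists (fun i => pz p (- zc nu p (r - alpha i)) * d i).
  by rewrite /lcomb; apply: eq_bigr => i _; rewrite -(actM hV) (pzK hdiv hp).
- move=> r v; split.
    case=> d [hd ->]; exists (lcomb act b (fun i => d i * p^-1)); split.
      exists (fun i => d i * p^-1); split => // i.
      apply: (@vge_le _ _ (r + nu p - alpha i + (- nu p))); first by lra.
      apply: vgeM => //; right; rewrite nuV //; exact: p_neq0 hp.
    rewrite lcomb_act //; apply: lcomb_ext => i /=.
    by rewrite divrK // (p_unit hdiv hp).
  case=> w [[d [hd ->]] ->]; rewrite lcomb_act //.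
  exists (fun i => d i * p); split => // i.
  apply: (@vge_le _ _ (r - alpha i + nu p)); first by lra.
  by apply: vgeM => //; right.
- move=> r s hrs v [d [hd ->]]; exists d; split => // i.
  by apply: vge_le (hd i); lra.
- move=> r v h; have [d0 hd0] := hb.1 v; exists d0; split => // i.
  apply: vge_left => s hs; have hs' : s + alpha i < r by lra.
  have [d [hd hv]] := h _ hs'.
  have e := indep_inj hV ind (etrans (esym hd0) hv).
  rewrite e; apply: vge_le (hd i); lra.
Qed.

Lemma split_scal (c : D) (hc : c != 0) (alpha : 'I_n -> RR) r v :
  scal_fun act c (split_fun nu act b alpha) r v <->
  split_fun nu act b (fun i => alpha i - nu c) r v.
Proof.
have cu : c \is a GRing.unit by exact: hdiv.
split.
  case=> w [[d [hd ->]] ->]; rewrite lcomb_act //.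
  exists (fun i => d i * c); split => // i.
  apply: (@vge_le _ _ (r - alpha i + nu c)); first by lra.
  by apply: vgeM => //; right.
case=> d [hd ->]; exists (lcomb act b (fun i => d i * c^-1)); split.
  exists (fun i => d i * c^-1); split => // i.
  apply: (@vge_le _ _ (r - (alpha i - nu c) + (- nu c))); first by lra.
  apply: vgeM => //; right; rewrite nuV //.
rewrite lcomb_act //; apply: lcomb_ext => i /=; by rewrite divrK.
Qed.

End Split.


Definition seg_aff (f : RR -> RR) := forall x y t, 0 <= t <= 1 ->
  f (t * x + (1 - t) * y) = t * f x + (1 - t) * f y.

Lemma aff1 f : seg_aff f -> forall s, f s = f 0 + s * (f 1 - f 0).
Proof.
move=> hf s.
case: (lerP 0 s) => hs0; case: (lerP s 1) => hs1.
- have h := hf 1 0 s; have e : s * 1 + (1 - s) * 0 = s by ring.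
  rewrite e in h; rewrite h; last by rewrite hs0 hs1.
  ring.
- have t01 : 0 <= s^-1 <= 1.
    apply/andP; split; first by rewrite invr_ge0 ltW // (lt_trans ltr01).
    by rewrite invf_le1 ?ltW // (lt_trans ltr01).
  have := hf s 0 (s^-1) t01; rewrite mulr0 addr0 mulVf ?gt_eqF //; last by rewrite (lt_trans ltr01).
  move=> h.
  have sne : s != 0 by rewrite gt_eqF // (lt_trans ltr01).
  rewrite h; field; exact: sne.
- have s1 : 0 < 1 - s by lra.
  set t := (1 - s)^-1.
  have t01 : 0 <= t <= 1.
    apply/andP; split; first by rewrite invr_ge0 ltW.
    by rewrite invf_le1 //; lra.
  have e0 : t * s + (1 - t) * 1 = 0.
    rewrite /t; field; rewrite gt_eqF //.
  have := hf s 1 t t01; rewrite e0 => h.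
  have ne : 1 - s != 0 by rewrite gt_eqF.
  rewrite h /t; field; exact: ne.
- exfalso; lra.
Qed.

Lemma aff_per f q : seg_aff f -> q != 0 -> f q = f 0 -> forall s, f s = f 0.
Proof.
move=> hf hq hper s.
have h1 := aff1 hf q; rewrite hper in h1.
have : q * (f 1 - f 0) = 0 by lra.
move/eqP; rewrite mulf_eq0 (negbTE hq) /= => /eqP h.
by rewrite (aff1 hf s) h mulr0 addr0.
Qed.

Section Vec.
Variable n : nat.
Notation vec := ('I_n -> RR).

Definition seg_affn (g : vec -> RR) := forall (x y : vec) t, 0 <= t <= 1 ->
  g (fun i => t * x i + (1 - t) * y i) = t * g x + (1 - t) * g y.

Lemma line_aff g (x y : vec) : seg_affn g ->
  seg_aff (fun s => g (fun i => s * x i + (1 - s) * y i)).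
Proof.
move=> hg a c t ht /=; rewrite -hg //; congr g.
by apply: functional_extensionality => i; ring.
Qed.

Lemma line_rep g (x y : vec) s : seg_affn g ->
  g (fun i => s * x i + (1 - s) * y i) = g y + s * (g x - g y).
Proof.
move=> hg; have := aff1 (line_aff x y hg) s; move=> /= ->.
have -> : (fun i => 0 * x i + (1 - 0) * y i) = y.
  by apply: functional_extensionality => i; ring.
have -> : (fun i => 1 * x i + (1 - 1) * y i) = x.
  by apply: functional_extensionality => i; ring.
by [].
Qed.

Definition zv : vec := fun _ => 0.
Definition ev (k : 'I_n) : vec := fun i => if i == k then 1 else 0.

Lemma homog g (x : vec) s : seg_affn g -> g (fun i => s * x i) = g zv + s * (g x - g zv).
Proof.
move=> hg; rewrite -(line_rep x zv s hg); congr g.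
by apply: functional_extensionality => i; rewrite /zv; ring.
Qed.

Lemma addit g (x y : vec) : seg_affn g -> g (fun i => x i + y i) = g x + g y - g zv.
Proof.
move=> hg.
have h1 := hg x y (1/2); have h2 := homog (fun i => x i + y i) (1/2) hg.
have e : (fun i => 1/2 * x i + (1 - 1/2) * y i) = (fun i => 1/2 * (x i + y i)).
  by apply: functional_extensionality => i; field.
rewrite e in h1; rewrite h2 in h1.
have ht : 0 <= (1/2 : RR) <= 1 by apply/andP; split; lra.
move: (h1 ht); lra.
Qed.

Lemma rep_gen g : seg_affn g -> forall (s : seq 'I_n), uniq s ->
  forall x : vec, (forall i, i \notin s -> x i = 0) ->
  g x = g zv + \sum_(k <- s) x k * (g (ev k) - g zv).
Proof.
move=> hg; elim=> [|k s ih] us x hx.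
  rewrite big_nil addr0; congr g; apply: functional_extensionality => i.
  exact: hx.
move: us => /= /andP [ks us].
set x' : vec := fun i => if i == k then 0 else x i.
have ex : x = (fun i => x' i + x k * ev k i).
  apply: functional_extensionality => i; rewrite /x' /ev.
  by case: (eqVneq i k) => [->|_]; rewrite ?mulr1 ?mulr0 ?add0r ?addr0.
have hx' : forall i, i \notin s -> x' i = 0.
  move=> i hi; rewrite /x'; case: (eqVneq i k) => // hik.
  by apply: hx; rewrite inE negb_or hik.
rewrite {1}ex addit // ih // homog // big_cons.
have -> : \sum_(j <- s) x' j * (g (ev j) - g zv) = \sum_(j <- s) x j * (g (ev j) - g zv).
  rewrite big_seq_cond [RHS]big_seq_cond; apply: eq_bigr => j /andP [js _].
  rewrite /x'; case: (eqVneq j k) => // ejk.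
  by move: ks; rewrite -ejk js.
ring.
Qed.

Lemma rep g (x : vec) : seg_affn g ->
  g x = g zv + \sum_(k < n) x k * (g (ev k) - g zv).
Proof.
move=> hg; apply: rep_gen => //; first exact: index_enum_uniq.
by move=> i; rewrite mem_index_enum.
Qed.

Definition swapi (i j k : 'I_n) := if k == i then j else if k == j then i else k.

Lemma swapi_eq i j k : (swapi i j k == i) = (k == j).
Proof.
rewrite /swapi; case: (eqVneq k i) => [->|ki].
  by rewrite eq_sym.
case: (eqVneq k j) => [kj|kj].
  by rewrite ?eqxx ?kj ?eqxx.
by rewrite ?(negbTE ki) ?(negbTE kj).
Qed.

Lemma sym_shift_const g : seg_affn g ->
  (forall (x : vec) s, g (fun i => x i + s) = g x) ->
  (forall i j (x : vec), g (fun k => x (swapi i j k)) = g x) ->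
  forall x, g x = g zv.
Proof.
move=> hg hs hsw x.
have ceq : forall i j, g (ev i) = g (ev j).
  move=> i j; rewrite -(hsw i j (ev i)); congr g.
  apply: functional_extensionality => k; by rewrite /ev swapi_eq.
have c0 : forall k, g (ev k) - g zv = 0.
  move=> k.
  have h1 := hs zv 1.
  have e1 : (fun i => zv i + 1) = (fun _ => 1) by apply: functional_extensionality => i; rewrite /zv add0r.
  rewrite e1 (rep _ hg) in h1.
  have : \sum_(k0 < n) 1 * (g (ev k0) - g zv) = n%:R * (g (ev k) - g zv).
    rewrite (eq_bigr (fun _ => g (ev k) - g zv)); last by move=> i _; rewrite mul1r (ceq i k).
    by rewrite sumr_const card_ord mulr_natl.
  move=> hsum; rewrite hsum in h1.
  have hn : n%:R != 0 :> RR by rewrite pnatr_eq0 -lt0n; apply: (leq_ltn_trans (leq0n k)); exact: ltn_ord.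
  have : n%:R * (g (ev k) - g zv) = 0 by lra.
  by move/eqP; rewrite mulf_eq0 (negbTE hn) /= => /eqP.
rewrite (rep _ hg) big1 ?addr0 // => k _; by rewrite c0 mulr0.
Qed.

Lemma half_ext g h (i j : 'I_n) : seg_affn g -> seg_affn h ->
  (forall x : vec, x j <= x i -> g x = h x) -> forall x, g x = h x.
Proof.
move=> hg hh H x.
set M := `|x j - x i| + 1.
set y : vec := fun k => if k == j then x k - M else x k.
set F := fun s => g (fun k => s * x k + (1 - s) * y k) - h (fun k => s * x k + (1 - s) * y k).
have hF : seg_aff F.
  move=> a c t ht; rewrite /F (line_aff x y hg) // (line_aff x y hh) //; ring.
have hM : 0 <= `|x j - x i| by [].
have F0 : F 0 = 0.
  rewrite /F; apply/eqP; rewrite subr_eq0; apply/eqP; apply: H.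
  rewrite /y eqxx; case: (eqVneq i j) => [->|ij]; rewrite ?eqxx ?(negbTE ij) /=.
    by rewrite mul0r !add0r subr0 mul1r; lra.
  rewrite mul0r !add0r subr0 !mul1r.
  have := ler_norm (x j - x i); rewrite /M; lra.
have Fm : F (-1) = 0.
  rewrite /F; apply/eqP; rewrite subr_eq0; apply/eqP; apply: H.
  rewrite /y eqxx; case: (eqVneq i j) => [->|ij]; rewrite ?eqxx ?(negbTE ij) /=.
    have := ler_norm (x j - x j); rewrite /M; lra.
  have := ler_norm (x j - x i); rewrite /M; lra.
have := aff1 hF (-1); rewrite Fm F0 => hm.
have F1 : F 1 = 0 by lra.
move: F1; rewrite /F.
have -> : (fun k => 1 * x k + (1 - 1) * y k) = x.
  by apply: functional_extensionality => k; ring.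
by move/eqP; rewrite subr_eq0 => /eqP.
Qed.

End Vec.


Lemma pred_ext (V : Type) (P Q : RR -> V -> Prop) :
  (forall x v, P x v <-> Q x v) -> P = Q.
Proof.
move=> h; apply: functional_extensionality => x.
apply: functional_extensionality => v; exact: propositional_extensionality.
Qed.

Section Lc.
Variables (D : nzRingType) (V : zmodType) (act : V -> D -> V)
  (hV : right_module act) (n : nat).

Lemma lcomb2 (F : 'I_n -> V) (d : 'I_n -> D) i j : i != j ->
  lcomb act F d = act (F i) (d i) + act (F j) (d j) +
    \sum_(k | (k != i) && (k != j)) act (F k) (d k).
Proof.
move=> ij; rewrite /lcomb (bigD1 i) //= (bigD1 j) /=; last by rewrite eq_sym.
by rewrite addrA.
Qed.

Lemma split_transform (b b' : 'I_n -> V) (al be : 'I_n -> RR) (nu : D -> RR)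
  (T S : ('I_n -> D) -> ('I_n -> D)) :
  (forall d, lcomb act b' d = lcomb act b (T d)) ->
  (forall e, T (S e) =1 e) ->
  (forall x d, (forall k, vge nu (x - be k) (d k)) <->
               (forall k, vge nu (x - al k) (T d k))) ->
  forall x v, split_fun nu act b' be x v <-> split_fun nu act b al x v.
Proof.
move=> hl hTS hc x v; split.
  case=> d [hd ->]; exists (T d); split; last exact: hl.
  by apply/hc.
case=> e [he ->]; exists (S e); split.
  by apply/hc => k; rewrite hTS.
by rewrite hl; apply: lcomb_ext => k; rewrite hTS.
Qed.

Lemma basis_transform (b b' : 'I_n -> V) (T S : ('I_n -> D) -> ('I_n -> D)) :
  is_basis act b ->
  (forall d, lcomb act b' d = lcomb act b (T d)) ->
  (forall e, T (S e) =1 e) ->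
  (forall d, (forall k, T d k = 0) -> forall k, d k = 0) ->
  is_basis act b'.
Proof.
move=> [hs hi] hl hTS hT; split.
  move=> v; have [e ->] := hs v; exists (S e).
  by rewrite hl; apply: lcomb_ext => k; rewrite hTS.
move=> d hd; apply: hT; apply: hi; by rewrite -hl.
Qed.

Definition elem (b : 'I_n -> V) (i j : 'I_n) : 'I_n -> V :=
  fun k => if k == j then b j + b i else b k.

Definition T1 (i j : 'I_n) (d : 'I_n -> D) : 'I_n -> D :=
  fun k => if k == i then d i + d j else d k.
Definition S1 (i j : 'I_n) (d : 'I_n -> D) : 'I_n -> D :=
  fun k => if k == i then d i - d j else d k.

Lemma rest_eq (F G : 'I_n -> V) (d e : 'I_n -> D) i j :
  (forall k, k != i -> k != j -> F k = G k /\ d k = e k) ->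
  \sum_(k | (k != i) && (k != j)) act (F k) (d k) =
  \sum_(k | (k != i) && (k != j)) act (G k) (e k).
Proof. by move=> h; apply: eq_bigr => k /andP [ki kj]; have [-> ->] := h k ki kj. Qed.

Lemma elem_lcomb (b : 'I_n -> V) i j d : i != j ->
  lcomb act (elem b i j) d = lcomb act b (T1 i j d).
Proof.
move=> ij; rewrite (lcomb2 _ _ ij) (lcomb2 _ _ ij).
rewrite (@rest_eq (elem b i j) b d d i j); last first.
  by move=> k ki kj; rewrite /elem (negbTE kj).
rewrite [in RHS](@rest_eq b b (T1 i j d) d i j); last first.
  by move=> k ki kj; rewrite /T1 (negbTE ki).
rewrite /elem /T1 eqxx (negbTE ij) eq_sym (negbTE ij) eqxx.
rewrite (actDl hV) (actDr hV).
rewrite -!addrA; congr (_ + _); rewrite addrC -!addrA; congr (_ + _).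
by rewrite addrC.
Qed.

Lemma T1S1 i j e : i != j -> T1 i j (S1 i j e) =1 e.
Proof.
move=> ij k; rewrite /T1 /S1; case: (eqVneq k i) => [->|ki].
  by rewrite eqxx eq_sym (negbTE ij) subrK.
by [].
Qed.

Lemma elem_basis b i j : i != j -> is_basis act b -> is_basis act (elem b i j).
Proof.
move=> ij hb; apply: (basis_transform hb (fun d => @elem_lcomb b i j d ij) (fun e => @T1S1 i j e ij)).
move=> d hd k.
have hj : d j = 0.
  by have := hd j; rewrite /T1 eq_sym (negbTE ij).
have := hd k; rewrite /T1; case: (eqVneq k i) => [->|_] //.
by rewrite hj addr0.
Qed.

Variables (E : unitRingType) (nu : E -> RR) (hnu : valuation nu).
End Lc.

Section Thick.
Variables (D : unitRingType) (nu : D -> RR) (hnu : valuation nu)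
  (V : zmodType) (act : V -> D -> V) (hV : right_module act) (n : nat).

Lemma P1 (b : 'I_n -> V) i j (ij : i != j) (al : 'I_n -> RR) : al j <= al i ->
  forall x v, split_fun nu act (elem b i j) al x v <-> split_fun nu act b al x v.
Proof.
move=> hal; apply: (split_transform (fun d => @elem_lcomb _ _ _ hV _ b i j d ij)
  (fun e => @T1S1 _ _ i j e ij)).
move=> x d; split.
  move=> h k; rewrite /T1; case: (eqVneq k i) => [->|_]; last exact: h.
  apply: (vgeD hnu) => //; apply: vge_le (h j); lra.
move=> h k.
have hj : vge nu (x - al j) (d j) by have := h j; rewrite /T1 eq_sym (negbTE ij).
case: (eqVneq k i) => [->|ki]; last by have := h k; rewrite /T1 (negbTE ki).
have -> : d i = T1 i j d i - d j by rewrite /T1 eqxx addrK.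
apply: (vgeB hnu); first exact: h.
apply: vge_le hj; lra.
Qed.

Definition T3 (i j : 'I_n) (d : 'I_n -> D) : 'I_n -> D :=
  fun k => if k == i then - d j else if k == j then d i + d j else d k.
Definition S3 (i j : 'I_n) (e : 'I_n -> D) : 'I_n -> D :=
  fun k => if k == i then e j + e i else if k == j then - e i else e k.

Lemma T3S3 i j e : i != j -> T3 i j (S3 i j e) =1 e.
Proof.
move=> ij k; have ji : j != i by rewrite eq_sym.
rewrite /T3 /S3.
case: (eqVneq k i) => [->|ki]; first by rewrite !eqxx (negbTE ji) opprK.
case: (eqVneq k j) => [->|kj] //; by rewrite !eqxx (negbTE ji) addrK.
Qed.

Lemma zmod_id (W : zmodType) (A B C X R : W) :
  A + B + C + R = - X + (B + C + (A + X)) + R.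
Proof.
congr (_ + _).
by rewrite [RHS]addrC [X in X - _]addrA addrK [RHS]addrC addrA.
Qed.

Lemma P3_lcomb (b : 'I_n -> V) i j d : i != j ->
  lcomb act (elem b j i) d = lcomb act (elem b i j) (T3 i j d).
Proof.
move=> ij; rewrite (lcomb2 act _ _ ij) (lcomb2 act _ _ ij).
rewrite (@rest_eq _ _ act _ (elem b j i) b d d i j); last first.
  by move=> k ki kj; rewrite /elem (negbTE ki).
rewrite [in RHS](@rest_eq _ _ act _ (elem b i j) b (T3 i j d) d i j); last first.
  by move=> k ki kj; rewrite /elem /T3 (negbTE ki) (negbTE kj).
rewrite /elem /T3 !eqxx (negbTE ij) eq_sym (negbTE ij).
rewrite !(actDl hV) !(actDr hV) !(actNr hV).
exact: zmod_id.
Qed.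

Lemma P3 (b : 'I_n -> V) i j (ij : i != j) (ga : 'I_n -> RR) : ga j <= ga i ->
  forall x v, split_fun nu act (elem b j i) ga x v <->
    split_fun nu act (elem b i j) (fun k => ga (swapi i j k)) x v.
Proof.
move=> hga; apply: (split_transform (fun d => @P3_lcomb b i j d ij)
  (fun e => @T3S3 i j e ij)).
have ji : j != i by rewrite eq_sym.
move=> x d; split.
  move=> h k; rewrite /T3 /swapi.
  case: (eqVneq k i) => [eki|ki]; first by subst k; apply: (vgeN hnu); apply: h.
  case: (eqVneq k j) => [ekj|kj]; last exact: h.
  subst k.
  apply: (vgeD hnu); first exact: h.
  apply: vge_le (h j); lra.
move=> h.
have hi := h i; have hj := h j.
rewrite /T3 /swapi !eqxx (negbTE ji) in hi hj.
have dj : vge nu (x - ga j) (d j) by apply/(vgeN_iff hnu).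
move=> k; case: (eqVneq k i) => [eki|ki].
  subst k.
  have -> : d i = (d i + d j) - d j by rewrite addrK.
  apply: (vgeB hnu) => //; apply: vge_le dj; lra.
case: (eqVneq k j) => [ekj|kj]; first by subst k.
by have := h k; rewrite /T3 /swapi (negbTE ki) (negbTE kj).
Qed.
End Thick.

Lemma swapi_inv n (i j k : 'I_n) : swapi i j (swapi i j k) = k.
Proof.
rewrite /swapi.
case: (eqVneq k i) => [eki|ki].
  subst k; rewrite ?eqxx; case: (eqVneq j i) => [eji|ji]; first by rewrite eji ?eqxx.
  by rewrite ?eqxx.
case: (eqVneq k j) => [ekj|kj].
  by subst k; rewrite ?eqxx.
by rewrite ?(negbTE ki) ?(negbTE kj).
Qed.

Section Apt.
Variables (D : unitRingType) (nu : D -> RR) (hnu : valuation nu)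
  (hdiv : forall x : D, x != 0 -> x \is a GRing.unit)
  (p : D) (hp : uniformizer nu p)
  (V : zmodType) (act : V -> D -> V) (hV : right_module act)
  (a : (RR -> V -> Prop) -> RR) (haff : affine_functional nu p act a)
  (c : D) (hc : c != 0) (hnc : nu c != 0)
  (hinv : forall Lam, lattice_fun nu p act Lam -> a (scal_fun act c Lam) = a Lam).

Definition gg n (b : 'I_n -> V) (al : 'I_n -> RR) := a (split_fun nu act b al).

Lemma gg_aff n (b : 'I_n -> V) : is_basis act b -> seg_affn (gg b).
Proof.
move=> hb x y t ht; rewrite /gg.
apply: haff => //; try exact: (split_lattice hnu hdiv hp hV hb).
Qed.

Lemma gg_shift n (b : 'I_n -> V) : is_basis act b ->
  forall (x : 'I_n -> RR) s, gg b (fun i => x i + s) = gg b x.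
Proof.
move=> hb x s.
set f := fun s => gg b (fun i => x i + s).
have hf : seg_aff f.
  move=> s1 s2 t ht; rewrite /f -(gg_aff hb) //; congr gg.
  by apply: functional_extensionality => i; ring.
have hq : - nu c != 0 by rewrite oppr_eq0.
have hper : f (- nu c) = f 0.
  rewrite /f /gg.
  have -> : split_fun nu act b (fun i => x i + - nu c) =
            scal_fun act c (split_fun nu act b x).
    by apply: pred_ext => r v; rewrite (split_scal hnu hdiv hV b hc).
  rewrite hinv; last exact: (split_lattice hnu hdiv hp hV hb).
  congr a; apply: pred_ext => r v.
  have -> : (fun i => x i + 0) = x by apply: functional_extensionality => i; rewrite addr0.
  by [].
have := aff_per hf hq hper s; rewrite /f => ->.
by congr gg; apply: functional_extensionality => i; rewrite addr0.
Qed.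

Lemma gg_swap n (b : 'I_n -> V) : is_basis act b ->
  forall i j (x : 'I_n -> RR), gg b (fun k => x (swapi i j k)) = gg b x.
Proof.
move=> hb i j x.
have [eij|ij] := eqVneq i j.
  subst j; congr gg; apply: functional_extensionality => k.
  by rewrite /swapi; case: (eqVneq k i) => [->|].
have ji : j != i by rewrite eq_sym.
have hA1 : forall y, gg (elem b i j) y = gg b y.
  apply: (half_ext (i := i) (j := j)).
  - exact: gg_aff (elem_basis hV ij hb).
  - exact: gg_aff.
  move=> y hy; rewrite /gg; congr a; apply: pred_ext.
  exact: P1.
have hA2 : forall y, gg (elem b j i) y = gg b y.
  apply: (half_ext (i := j) (j := i)).
  - exact: gg_aff (elem_basis hV ji hb).
  - exact: gg_aff.
  move=> y hy; rewrite /gg; congr a; apply: pred_ext.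
  exact: P1.
have key : forall y : 'I_n -> RR, y j <= y i ->
    gg b (fun k => y (swapi i j k)) = gg b y.
  move=> y hy; rewrite -hA1 -hA2 /gg; congr a; apply: pred_ext => r v.
  by rewrite (P3 hnu hV b ij hy).
case: (lerP (x j) (x i)) => hx; first exact: key.
set y := fun k => x (swapi i j k).
have hy : y j <= y i.
  rewrite /y /swapi eqxx (negbTE ji) eqxx; exact: ltW.
have := key y hy.
have -> : (fun k => y (swapi i j k)) = x.
  by apply: functional_extensionality => k; rewrite /y swapi_inv.
by move=> ->.
Qed.

Lemma gg_const n (b : 'I_n -> V) : is_basis act b ->
  forall x y, gg b x = gg b y.
Proof.
move=> hb x y.
have h := sym_shift_const (gg_aff hb) (gg_shift hb) (gg_swap hb).
by rewrite h (h y).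
Qed.

End Apt.


Lemma fin_ex (m : nat) (Q : 'I_m -> RR -> Prop) :
  (forall l s s', s' <= s -> Q l s -> Q l s') ->
  (forall l, exists s, Q l s) -> exists s, forall l, Q l s.
Proof.
elim: m Q => [|m ih] Q mono h; first by exists 0 => -[].
have [s1 hs1] := ih (fun l => Q (lift ord0 l)) (fun l => mono _) (fun l => h _).
have [s0 hs0] := h ord0.
exists (Num.min s0 s1) => l; case: (unliftP ord0 l) => [l' ->|->].
  by apply: mono (hs1 l'); rewrite ge_min lexx orbT.
by apply: mono hs0; rewrite ge_min lexx.
Qed.

Lemma fin_ex_gt (m : nat) (A : RR) (Q : 'I_m -> RR -> Prop) :
  (forall l s s', s' <= s -> Q l s -> Q l s') ->
  (forall l, exists s, A < s /\ Q l s) -> exists s, A < s /\ forall l, Q l s.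
Proof.
elim: m Q => [|m ih] Q mono h; first by exists (A + 1); split => [|[]//]; lra.
have [s1 [a1 hs1]] := ih (fun l => Q (lift ord0 l)) (fun l => mono _) (fun l => h _).
have [s0 [a0 hs0]] := h ord0.
exists (Num.min s0 s1); split; first by rewrite lt_min a0 a1.
move=> l; case: (unliftP ord0 l) => [l' ->|->].
  by apply: mono (hs1 l'); rewrite ge_min lexx orbT.
by apply: mono hs0; rewrite ge_min lexx.
Qed.

Lemma fin_argmin (m : nat) (P : pred 'I_m) (F : 'I_m -> RR) (l1 : 'I_m) :
  P l1 -> exists l0, P l0 /\ forall l, P l -> F l0 <= F l.
Proof.
move=> h1; case: (@arg_minP _ _ _ l1 P F h1) => l0 hl0 hmin.
by exists l0; split.
Qed.

Section LF.
Variables (D : unitRingType) (nu : D -> RR) (hnu : valuation nu)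
  (hdiv : forall x : D, x != 0 -> x \is a GRing.unit)
  (p : D) (hp : uniformizer nu p)
  (V : zmodType) (act : V -> D -> V) (hV : right_module act)
  (Lam : RR -> V -> Prop) (hL : lattice_fun nu p act Lam).

Lemma L_full r : full_lattice nu act (Lam r). Proof. by case: hL. Qed.

Lemma L0 r : Lam r 0.
Proof.
have [m [g [hg _]]] := L_full r; apply/hg; exists (fun _ => 0); split.
  by move=> i; left.
by rewrite lcomb0.
Qed.

Lemma L_add r x y : Lam r x -> Lam r y -> Lam r (x + y).
Proof.
have [m [g [hg _]]] := L_full r.
move=> /hg [a [ha ->]] /hg [b [hb ->]]; apply/hg.
exists (fun i => a i + b i); split; last by rewrite lcombD.
by move=> i; apply: vgeD.
Qed.

Lemma L_opp r x : Lam r x -> Lam r (- x).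
Proof.
have [m [g [hg _]]] := L_full r.
move=> /hg [a [ha ->]]; apply/hg.
exists (fun i => - a i); split; last by rewrite lcombN.
by move=> i; apply: vgeN.
Qed.

Lemma L_sub r x y : Lam r x -> Lam r y -> Lam r (x - y).
Proof. by move=> hx hy; apply: L_add => //; apply: L_opp. Qed.

Lemma L_o r x d : Lam r x -> vge nu 0 d -> Lam r (act x d).
Proof.
have [m [g [hg _]]] := L_full r.
move=> /hg [a [ha ->]] hd; apply/hg.
exists (fun i => a i * d); split; last by rewrite lcomb_act.
move=> i; rewrite -[0]addr0; exact: vgeM.
Qed.

Lemma L_sum r (m : nat) (F : 'I_m -> V) (P : pred 'I_m) :
  (forall l, P l -> Lam r (F l)) -> Lam r (\sum_(l | P l) F l).
Proof.
move=> h; apply: (big_ind (Lam r)); first exact: L0.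
  exact: L_add.
exact: h.
Qed.

Lemma L_dec r s v : r <= s -> Lam s v -> Lam r v.
Proof. by move=> hrs hv; case: hL => _ _ h _; exact: h hrs v hv. Qed.

Lemma L_left r v : (forall s, s < r -> Lam s v) -> Lam r v.
Proof. by case: hL => _ _ _ h; apply: h. Qed.

Lemma act_inv x d : d \is a GRing.unit -> act (act x d) d^-1 = x.
Proof. by move=> du; rewrite -(actM hV) mulrV // (act1 hV). Qed.

Lemma act_invV x d : d \is a GRing.unit -> act (act x d^-1) d = x.
Proof. by move=> du; rewrite -(actM hV) mulVr // (act1 hV). Qed.

Lemma L_per r x : Lam r x <-> Lam (r + nu p) (act x p).
Proof.
have pu := p_unit hdiv hp.
case: hL => _ hper _ _; split.
  by move=> hx; apply/hper; exists x.
move/hper => [w [hw e]].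
have : act (act x p) p^-1 = act (act w p) p^-1 by rewrite e.
by rewrite !act_inv // => ->.
Qed.

Lemma L_pexp (k : nat) r x : Lam r x <-> Lam (r + k%:R * nu p) (act x (p ^+ k)).
Proof.
elim: k r x => [|k ih] r x.
  by rewrite expr0 (act1 hV) mul0r addr0.
rewrite exprSr (actM hV) (ih r x) (L_per (r + k%:R * nu p) (act x (p ^+ k))).
have -> : r + k.+1%:R * nu p = r + k%:R * nu p + nu p.
  by rewrite -nat1r mulrDl mul1r; ring.
by [].
Qed.

Lemma L_pz (z : int) r x : Lam r x <-> Lam (r + z%:~R * nu p) (act x (pz p z)).
Proof.
have pu := p_unit hdiv hp.
case: z => k.
  by rewrite /pz -exprnP (L_pexp k).
rewrite /pz NegzE -exprnN.
have qu : p ^+ k.+1 \is a GRing.unit by rewrite unitrX.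
set r' := r + (- k.+1%:Z)%:~R * nu p.
set x' := act x (p ^+ k.+1)^-1.
have -> : Lam r x <-> Lam (r' + k.+1%:R * nu p) (act x' (p ^+ k.+1)).
  rewrite /x' act_invV //.
  have -> : r' + k.+1%:R * nu p = r by rewrite /r' intrN mulNr; ring.
  by [].
by rewrite -L_pexp.
Qed.

Lemma act_neq0 x d : x != 0 -> d != 0 -> act x d != 0.
Proof.
move=> hx hd; apply/eqP => h; move/eqP: hx; apply.
by rewrite -(act_inv x (hdiv hd)) h (act0l hV).
Qed.

Lemma L_scale r x d : d != 0 -> Lam r x -> Lam (r + nu d) (act x d).
Proof.
move=> hd hx.
have [z hz] := nu_mult hnu hdiv hp hd.
set u := pz p (- z) * d.
have ed : d = pz p z * u by rewrite /u (pzK hdiv hp).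
have nuu : nu u = 0.
  by rewrite /u (nuM hnu) ?(pz_neq0 hdiv hp) // (nu_pz hnu hdiv hp) hz intrN mulNr addNr.
rewrite hz ed (actM hV).
apply: L_o; first by apply/(L_pz z r x).
by right; rewrite nuu.
Qed.

Lemma L_unscale r x d : d != 0 -> Lam (r + nu d) (act x d) -> Lam r x.
Proof.
move=> hd h.
have hd' : d^-1 != 0 by rewrite invr_eq0.
have := L_scale hd' h; rewrite act_inv ?hdiv // (nuV hnu hdiv) //.
by rewrite addrK.
Qed.

Lemma L_some v : exists s, Lam s v.
Proof.
have [m [g [hg hsp]]] := L_full 0.
have [d ->] := hsp v.
have hgl : forall l, Lam 0 (g l).
  move=> l; apply/hg; exists (fun i => if i == l then 1 else 0); split.
    by move=> i; case: ifP => _; [right; rewrite (nu1 hnu) | left].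
  rewrite /lcomb (bigD1 l) //= eqxx (act1 hV) big1 ?addr0 // => i /negbTE ->.
  exact: act0r.
have hex : forall l, exists s, Lam s (act (g l) (d l)).
  move=> l; have [->|dl] := eqVneq (d l) 0.
    by exists 0; rewrite (act0r hV); apply: L0.
  exists (nu (d l)); have := L_scale dl (hgl l); by rewrite add0r.
have [s hs] := @fin_ex m (fun l s => Lam s (act (g l) (d l)))
  (fun l s s' hss h => L_dec hss h) hex.
by exists s; apply: L_sum => l _; apply: hs.
Qed.

End LF.


Section Two.
Variables (D : unitRingType) (nu : D -> RR) (hnu : valuation nu)
  (hdiv : forall x : D, x != 0 -> x \is a GRing.unit)
  (p : D) (hp : uniformizer nu p)
  (V : zmodType) (act : V -> D -> V) (hV : right_module act).

Lemma floor_mult r : exists z : int, z%:~R * nu p <= r /\ r < z%:~R * nu p + nu p.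
Proof.
set e := nu p; have e0 : 0 < e by exact: nup_gt0 hp.
exists (Num.floor (r / e)).
have hq : r = (r / e) * e by rewrite divfK // gt_eqF.
have f1 := Num.Theory.floor_le (r / e).
have f2 := Num.Theory.floorD1_gt (r / e).
rewrite intrD in f2; split.
  by rewrite [X in _ <= X]hq ler_pM2r.
have : r < ((Num.floor (r / e))%:~R + 1) * e by rewrite [X in X < _]hq ltr_pM2r.
by rewrite mulrDl mul1r.
Qed.

Lemma L_bound (Lam1 Lam2 : RR -> V -> Prop) :
  lattice_fun nu p act Lam1 -> lattice_fun nu p act Lam2 ->
  exists C, forall r v, Lam1 r v -> Lam2 (r - C) v.
Proof.
move=> h1 h2.
have [m [g [hg _]]] := L_full h1 0.
have [s hs] := @fin_ex m (fun l s => Lam2 s (g l))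
  (fun l s s' hss h => L_dec h2 hss h) (fun l => L_some hnu hdiv hp hV h2 (g l)).
have h0 : forall v, Lam1 0 v -> Lam2 s v.
  move=> v /hg [a [ha ->]]; apply: (L_sum hnu hV h2) => l _.
  by apply: (L_o hnu hV h2) => //; apply: hs.
exists (nu p - s) => r v hv.
have [z [hz1 hz2]] := floor_mult r.
have hv' : Lam1 (z%:~R * nu p) v by apply: (L_dec h1 hz1 hv).
have hw : Lam1 0 (act v (pz p (- z))).
  have := (L_pz hdiv hp hV h1 (- z) (z%:~R * nu p) v).1 hv'.
  by rewrite intrN mulNr addrN.
have := (L_pz hdiv hp hV h2 z s _).1 (h0 _ hw).
rewrite -(actM hV) -(pzD hdiv hp) addNr /pz expr0z (act1 hV).
by apply: (L_dec h2); lra.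
Qed.

End Two.


Section Norm.
Variables (D : unitRingType) (nu : D -> RR) (hnu : valuation nu)
  (hdiv : forall x : D, x != 0 -> x \is a GRing.unit)
  (p : D) (hp : uniformizer nu p)
  (V : zmodType) (act : V -> D -> V) (hV : right_module act)
  (n : nat) (b0 : 'I_n -> V) (hb0 : is_basis act b0).

Definition P0 := split_fun nu act b0 (fun _ => 0).

Lemma hP0 : lattice_fun nu p act P0.
Proof. exact: split_lattice. Qed.

Lemma P0_coord r d : P0 r (lcomb act b0 d) <-> forall i, vge nu r (d i).
Proof.
split.
  case=> d' [hd' e] i.
  have := indep_inj hV (basis_indep hb0) e i => ->.
  by have := hd' i; rewrite subr0.
by move=> h; exists d; split => // i; rewrite subr0.
Qed.

Lemma notall (Lam : RR -> V -> Prop) : lattice_fun nu p act Lam ->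
  forall v, v != 0 -> exists r0, ~ Lam r0 v.
Proof.
move=> hL v hv; apply: NNPP => hall.
have hall' : forall r, Lam r v.
  by move=> r; apply: NNPP => h; apply: hall; exists r.
have [C hC] := L_bound hnu hdiv hp hV hL hP0.
have [d ed] := hb0.1 v.
move/eqP: hv; apply; rewrite ed.
rewrite (@lcomb_ext _ _ act _ b0 d (fun _ => 0)) ?(lcomb0 hV) // => i /=.
apply: (@vge_all _ nu) => r.
have := hC (r + C) v (hall' _); rewrite ed P0_coord => /(_ i).
by rewrite addrK.
Qed.

Lemma norm_ex (Lam : RR -> V -> Prop) : lattice_fun nu p act Lam ->
  forall v, v != 0 -> exists w, forall r, Lam r v <-> r <= w.
Proof.
move=> hL v hv.
have [r0 hr0] := notall hL hv.
set E := fun r => Lam r v.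
have hb : Raxioms.bound E.
  exists r0 => x hx; apply/RleP; case: (lerP x r0) => // hlt.
  by exfalso; apply: hr0; apply: (L_dec hL (ltW hlt)).
have hne : exists x, E x by exact: (L_some hnu hdiv hp hV hL v).
have [w [hub hlub]] := @Raxioms.completeness E hb hne.
exists w => r; split.
  by move=> h; apply/RleP; apply: hub.
move=> hrw; apply: (L_dec hL hrw); apply: (L_left hL) => s hs.
apply: NNPP => hns.
have : Raxioms.is_upper_bound E s.
  move=> x hx; apply/RleP; case: (lerP x s) => // hlt.
  by exfalso; apply: hns; apply: (L_dec hL (ltW hlt)).
move/hlub/RleP => hws; move: hs; lra.
Qed.

Definition om (Lam : RR -> V -> Prop) (v : V) : RR :=
  epsilon (inhabits 0) (fun w => forall r, Lam r v <-> r <= w).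

Lemma om_spec (Lam : RR -> V -> Prop) : lattice_fun nu p act Lam ->
  forall v, v != 0 -> forall r, Lam r v <-> r <= om Lam v.
Proof. by move=> hL v hv; apply: (epsilon_spec (inhabits 0) _ (norm_ex hL hv)). Qed.

Lemma le_uniq (w1 w2 : RR) : (forall r : RR, r <= w1 <-> r <= w2) -> w1 = w2.
Proof.
move=> h; apply/eqP; rewrite eq_le; apply/andP; split.
  by apply/h.
by apply/h.
Qed.

Lemma om_in (Lam : RR -> V -> Prop) : lattice_fun nu p act Lam ->
  forall v, v != 0 -> Lam (om Lam v) v.
Proof. by move=> hL v hv; apply/(om_spec hL hv). Qed.

Lemma om_scale (Lam : RR -> V -> Prop) : lattice_fun nu p act Lam ->
  forall v d, v != 0 -> d != 0 -> om Lam (act v d) = om Lam v + nu d.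
Proof.
move=> hL v d hv hd.
have hvd := act_neq0 hdiv hV hv hd.
apply: le_uniq => r; rewrite -(om_spec hL hvd); split.
  move=> h; have : Lam (r - nu d) v.
    by apply: (L_unscale hnu hdiv hp hV hL hd); rewrite subrK.
  by rewrite (om_spec hL hv); lra.
move=> h; have : Lam (r - nu d) v by rewrite (om_spec hL hv); lra.
by move/(L_scale hnu hdiv hp hV hL hd); rewrite subrK.
Qed.

Lemma om_P0 v : v != 0 -> exists z : int, om P0 v = z%:~R * nu p.
Proof.
move=> hv; set w := om P0 v; exists (zc nu p w).
have [hc1 hc2] := ceil_mult hnu hdiv hp w.
have [d ed] := hb0.1 v.
have hw : P0 w v by apply: om_in => //; exact: hP0.
apply/eqP; rewrite eq_le hc1 andTb.
have : P0 ((zc nu p w)%:~R * nu p) v.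
  rewrite ed P0_coord => i.
  move: hw; rewrite ed P0_coord => /(_ i); case=> [->|hi]; first by left.
  have [d0|dn] := eqVneq (d i) 0; first by rewrite d0; left.
  by right; apply: hc2.
by rewrite (om_spec hP0 hv).
Qed.

End Norm.


Section Dep.
Variables (D : unitRingType) (hdiv : forall x : D, x != 0 -> x \is a GRing.unit).

Lemma dep_step n m' (X : 'I_m'.+1 -> 'I_n.+1 -> D) l0 (c' : 'I_m' -> D) i :
  let x0 := X l0 ord0 in
  let c := fun l => if unlift l0 l is Some l' then c' l'
                    else - \sum_(l' < m') x0^-1 * X (lift l0 l') ord0 * c' l' in
  \sum_(l < m'.+1) X l i * c l =
  \sum_(l' < m') (X (lift l0 l') i - X l0 i * (x0^-1 * X (lift l0 l') ord0)) * c' l'.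
Proof.
move=> x0 c.
rewrite (bigD1_ord l0 (P := xpredT)) //=.
rewrite /c unlift_none.
under eq_bigr do rewrite liftK.
rewrite mulrN mulr_sumr -sumrN -big_split /=.
apply: eq_bigr => l' _.
by rewrite mulrBl addrC !mulrA.
Qed.

Lemma dep n : forall m (X : 'I_m -> 'I_n -> D), (n < m)%N ->
  exists c : 'I_m -> D, (exists l, c l != 0) /\ forall i, \sum_(l < m) X l i * c l = 0.
Proof.
elim: n => [|n ih] m X hm.
  exists (fun _ => 1); split; last by case.
  by exists (Ordinal hm); apply: oner_neq0.
case: m X hm => [//|m'] X hm.
have hm' : (n < m')%N by [].
case: (boolP [exists l, X l ord0 != 0]) => [/existsP [l0 hl0]|].
  set x0 := X l0 ord0.
  set Y := fun (l' : 'I_m') (i' : 'I_n) =>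
    X (lift l0 l') (lift ord0 i') - X l0 (lift ord0 i') * (x0^-1 * X (lift l0 l') ord0).
  have [c' [[l1 hl1] hc']] := ih m' Y hm'.
  set c := fun l => if unlift l0 l is Some l' then c' l'
                    else - \sum_(l' < m') x0^-1 * X (lift l0 l') ord0 * c' l'.
  exists c; split.
    by exists (lift l0 l1); rewrite /c liftK.
  move=> i; rewrite (dep_step X l0 c' i).
  case: (unliftP ord0 i) => [i' ->|->].
    exact: hc'.
  apply: big1 => l' _.
  by rewrite -/x0 mulrA mulrV ?mul1r ?subrr ?mul0r // hdiv.
rewrite negb_exists => /forallP h0.
set X' := fun (l : 'I_m'.+1) (i' : 'I_n) => X l (lift ord0 i').
have [c [hc1 hc2]] := ih m'.+1 X' (ltnW hm).
exists c; split => // i.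
case: (unliftP ord0 i) => [i' ->|->].
  exact: hc2.
apply: big1 => l _.
by move: (h0 l); rewrite negbK => /eqP ->; rewrite mul0r.
Qed.
End Dep.


Section Phi.
Variables (D : unitRingType) (nu : D -> RR) (hnu : valuation nu)
  (hdiv : forall x : D, x != 0 -> x \is a GRing.unit)
  (p : D) (hp : uniformizer nu p)
  (V : zmodType) (act : V -> D -> V) (hV : right_module act)
  (n : nat) (b0 : 'I_n -> V) (hb0 : is_basis act b0)
  (Lam : RR -> V -> Prop) (hL : lattice_fun nu p act Lam).

Let P0' := P0 nu act b0.
Let hP0' : lattice_fun nu p act P0' := hP0 hnu hdiv hp hV hb0.

Definition phi v := om Lam v - om P0' v.

Let omsc := om_scale hnu hdiv hp hV hb0.
Let omsp := om_spec hnu hdiv hp hV hb0.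
Let omin := om_in hnu hdiv hp hV hb0.

Lemma phi_scale v d : v != 0 -> d != 0 -> phi (act v d) = phi v.
Proof.
move=> hv hd; rewrite /phi (omsc hL hv hd) (omsc hP0' hv hd); ring.
Qed.

Lemma phi_bound : exists C, forall v, v != 0 -> phi v <= C.
Proof.
have [C hC] := L_bound hnu hdiv hp hV hL hP0'.
exists C => v hv.
have := hC _ _ (omin hL hv).
rewrite (omsp hP0' hv) /phi; lra.
Qed.

Lemma no_indep (w : 'I_n.+1 -> V) : ~ (forall c, lcomb act w c = 0 -> forall l, c l = 0).
Proof.
move=> hi.
pose X := fun l => epsilon (inhabits (fun _ : 'I_n => (0 : D)))
  (fun d => w l = lcomb act b0 d).
have hX : forall l, w l = lcomb act b0 (X l).
  by move=> l; apply: (epsilon_spec (inhabits _) (fun d => w l = lcomb act b0 d)); apply: hb0.1.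
have [c [[l1 hl1] hc]] := dep hdiv (fun l i => X l i) (ltnSn n).
move/eqP: hl1; apply; apply: hi.
rewrite /lcomb.
under eq_bigr do rewrite hX (lcomb_act hV) /lcomb.
rewrite exchange_big /=; apply: big1 => i _.
by rewrite -(act_sumr hV) hc (act0r hV).
Qed.

Lemma indep_classes m (w : 'I_m -> V) : (forall l, w l != 0) ->
  (forall l l', l != l' -> forall z : int, phi (w l) - phi (w l') != z%:~R * nu p) ->
  forall c, lcomb act w c = 0 -> forall l, c l = 0.
Proof.
move=> hw hdist c hc l1; apply: NNPP => /eqP hl1.
set t := fun l => act (w l) (c l).
have [l0 [hl0 hmin]] := @fin_argmin m (fun l => c l != 0) (fun l => om Lam (t l)) l1 hl1.
set A := om Lam (t l0).
have tnz : forall l, c l != 0 -> t l != 0 by move=> l hl; apply: act_neq0.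
have omt : forall l, c l != 0 -> om Lam (t l) = phi (w l) + om P0' (w l) + nu (c l).
  by move=> l hl; rewrite /t (omsc hL (hw l) hl) /phi; ring.
have gt : forall l, c l != 0 -> l != l0 -> A < om Lam (t l).
  move=> l hl hll0; rewrite lt_def hmin // andbT.
  apply/negP => /eqP heq.
  have [z1 hz1] := om_P0 hnu hdiv hp hV hb0 (hw l).
  have [z0 hz0] := om_P0 hnu hdiv hp hV hb0 (hw l0).
  have [y1 hy1] := nu_mult hnu hdiv hp hl.
  have [y0 hy0] := nu_mult hnu hdiv hp hl0.
  move/negP: (hdist l l0 hll0 (z0 + y0 - z1 - y1)); apply; apply/eqP.
  move: heq; rewrite /A !omt // hz1 hz0 hy1 hy0 !intrD !intrN => heq.
  rewrite /P0' in hz1 hz0 heq *; lra.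
have hex : forall l, exists s, A < s /\ (l != l0 -> Lam s (t l)).
  move=> l; case: (eqVneq l l0) => [->|hll0].
    by exists (A + 1); split; [lra | rewrite ?eqxx].
  case: (eqVneq (c l) 0) => [cl0|cln].
    exists (A + 1); split; first lra.
    by move=> _; rewrite /t cl0 (act0r hV); apply: (L0 hV hL).
  exists (om Lam (t l)); split; first exact: gt.
  by move=> _; exact: (omin hL (tnz l cln)).
have [s [hs hQ]] := @fin_ex_gt m A (fun l s => l != l0 -> Lam s (t l))
  (fun l s s' hss h hl => L_dec hL hss (h hl)) hex.
have hsum : Lam s (\sum_(l | l != l0) t l).
  by apply: (L_sum hnu hV hL) => l hl; apply: hQ.
have e0 : t l0 = - \sum_(l | l != l0) t l.
  have := hc; rewrite /lcomb (bigD1 l0) //=.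
  by move/eqP; rewrite addr_eq0 => /eqP.
have := L_opp hnu hV hL hsum; rewrite -e0 (omsp hL (tnz _ hl0)) -/A.
lra.
Qed.

Lemma phi_max (U : V -> Prop) : (exists v, U v /\ v != 0) ->
  exists v, [/\ U v, v != 0 & forall w, U w -> w != 0 -> phi w <= phi v].
Proof.
move=> [v0 [hU0 hv0]].
have [C hC] := phi_bound.
set E := fun x => exists v, [/\ U v, v != 0 & x = phi v].
have hb : Raxioms.bound E.
  by exists C => x [v [hv hvn ->]]; apply/RleP; apply: hC.
have hne : exists x, E x by exists (phi v0), v0.
have [M [hub hlub]] := @Raxioms.completeness E hb hne.
have ub : forall v, U v -> v != 0 -> phi v <= M.
  by move=> v hv hvn; apply/RleP; apply: hub; exists v.
apply: NNPP => hno.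
have lt : forall v, U v -> v != 0 -> phi v < M.
  move=> v hv hvn; rewrite lt_def ub // andbT; apply/eqP => heq; apply: hno.
  by exists v; split => // w hw hwn; rewrite -heq; apply: ub.
have e0 : 0 < nu p by exact: nup_gt0 hp.
have approx : forall t, t < M -> exists v, [/\ U v, v != 0 & t < phi v].
  move=> t ht; apply: NNPP => hn.
  have : Raxioms.is_upper_bound E t.
    move=> x [v [hv hvn ->]]; apply/RleP; case: (lerP (phi v) t) => // h.
    by exfalso; apply: hn; exists v.
  by move/hlub/RleP; lra.
have build : forall k, exists ws : 'I_k -> V,
    (forall l, [/\ U (ws l), ws l != 0 & M - nu p < phi (ws l)]) /\
    (forall l l', l != l' -> phi (ws l) != phi (ws l')).
  elim => [|k [ws [h1 h2]]].
    by exists (fun _ => v0); split; case.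
  have hex : forall l, exists s, - M < s /\ phi (ws l) <= - s.
    move=> l; exists (- phi (ws l)); rewrite opprK lexx; split => //.
    by case: (h1 l) => hu hn _; have := lt _ hu hn; lra.
  have mono : forall l s s', s' <= s -> phi (ws l) <= - s -> phi (ws l) <= - s'.
    by move=> l s s' hss h; lra.
  have [s [hs hsQ]] := @fin_ex_gt k (- M) (fun l s => phi (ws l) <= - s) mono hex.
  set t := Num.max (- s) (M - nu p).
  have htM : t < M by rewrite /t gt_max; apply/andP; split; lra.
  have [v [hv hvn hvt]] := approx t htM.
  have ht1 : - s <= t by rewrite /t le_max lexx.
  have ht2 : M - nu p <= t by rewrite /t le_max lexx orbT.
  exists (fun l : 'I_k.+1 => if unlift ord_max l is Some l' then ws l' else v).
  split.
    move=> l /=; have [l' el|el] := unliftP ord_max l.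
      exact: h1.
    by split => //; lra.
  move=> l l' /=; have [a ea|ea] := unliftP ord_max l;
    have [b eb|eb] := unliftP ord_max l'.
  - move=> hab; apply: h2; apply: contraNneq hab => eab; by rewrite ea eb eab.
  - move=> _; apply/negP => /eqP he; have := hsQ a; lra.
  - move=> _; apply/negP => /eqP he; have := hsQ b; lra.
  - by rewrite ea eb eqxx.
have [ws [h1 h2]] := build n.+1.
apply: (@no_indep ws).
apply: indep_classes.
  by move=> l; case: (h1 l).
move=> l l' hll' z; apply/eqP => hz.
have [hu hn ha] := h1 l; have [hu' hn' hb'] := h1 l'.
have la := lt _ hu hn; have lb := lt _ hu' hn'.
have hneq := h2 l l' hll'.
move: hz; case: z => [[|k]|k] hz.
- move/negP: hneq; apply; apply/eqP; move: hz; rewrite mul0r; lra.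
- have hk : 1 <= k.+1%:R :> RR by rewrite ler1n.
  move: hz; rewrite -[(Posz k.+1)%:~R]/(k.+1%:R) => hz; nra.
- have hk : 1 <= k.+1%:R :> RR by rewrite ler1n.
  move: hz; rewrite NegzE intrN -[(Posz k.+1)%:~R]/(k.+1%:R) => hz; nra.
Qed.
End Phi.


Section Q.
Variables (D : unitRingType) (nu : D -> RR) (hnu : valuation nu)
  (hdiv : forall x : D, x != 0 -> x \is a GRing.unit)
  (p : D) (hp : uniformizer nu p)
  (V : zmodType) (act : V -> D -> V) (hV : right_module act)
  (n : nat) (b0 : 'I_n -> V) (hb0 : is_basis act b0)
  (Lam : RR -> V -> Prop) (hL : lattice_fun nu p act Lam).

Let P0' := P0 nu act b0.
Let hP0' : lattice_fun nu p act P0' := hP0 hnu hdiv hp hV hb0.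
Let omsc := om_scale hnu hdiv hp hV hb0.
Let omsp := om_spec hnu hdiv hp hV hb0.
Let omin := om_in hnu hdiv hp hV hb0.
Let phi' := phi nu act b0 Lam.

Definition supp (S : {set 'I_n}) (d : 'I_n -> D) := forall k, k \notin S -> d k = 0.
Definition spanS (S : {set 'I_n}) (v : V) := exists d, supp S d /\ v = lcomb act b0 d.

Definition QS (S : {set 'I_n}) := exists (u : 'I_n -> V) (al be : 'I_n -> RR),
  [/\ (forall d, supp S d -> spanS S (lcomb act u d)),
      (forall c, supp S c -> exists d, supp S d /\ lcomb act b0 c = lcomb act u d),
      (forall d r, supp S d -> (Lam r (lcomb act u d) <->
          forall k, k \in S -> vge nu (r - al k) (d k))) &
      (forall d r, supp S d -> (P0' r (lcomb act u d) <->
          forall k, k \in S -> vge nu (r - be k) (d k)))].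

Lemma scal_norm (Lm : RR -> V -> Prop) (hLm : lattice_fun nu p act Lm) x dj r :
  x != 0 -> Lm r (act x dj) <-> vge nu (r - om Lm x) dj.
Proof.
move=> hx; have [->|hd] := eqVneq dj 0.
  by rewrite (act0r hV); split => _; [left | apply: (L0 hV hLm)].
rewrite (omsp hLm (act_neq0 hdiv hV hx hd)) (omsc hLm hx hd) (vge_nz _ _ hd).
split => h; lra.
Qed.

Lemma lcomb_upd (u'' : 'I_n -> V) (x : V) j d :
  lcomb act (fun k => if k == j then x else u'' k) d =
  act x (d j) + lcomb act u'' (fun k => if k == j then 0 else d k).
Proof.
rewrite /lcomb (bigD1 j) //= eqxx [X in _ = _ + X](bigD1 j) //= eqxx (act0r hV) add0r.
congr (_ + _); apply: eq_bigr => k /negbTE ->; by [].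
Qed.

Lemma QS0 : QS set0.
Proof.
have z : forall d, supp set0 d -> d =1 (fun _ => 0).
  by move=> d hd k; apply: hd; rewrite inE.
have lz : forall (F : 'I_n -> V) d, supp set0 d -> lcomb act F d = 0.
  by move=> F d hd; rewrite (lcomb_ext act F (z d hd)) (lcomb0 hV).
exists b0, (fun _ => 0), (fun _ => 0); split.
- move=> d hd; exists (fun _ => 0); split; first by [].
  by rewrite (lz _ _ hd) (lcomb0 hV).
- move=> c hc; exists (fun _ => 0); split => //.
  by rewrite (lz _ _ hc) (lcomb0 hV).
- move=> d r hd; rewrite (lz _ _ hd); split => _; first by move=> k; rewrite inE.
  exact: (L0 hV hL).
- move=> d r hd; rewrite (lz _ _ hd); split => _; first by move=> k; rewrite inE.
  exact: (L0 hV hP0').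
Qed.

Lemma QS_step (S : {set 'I_n}) (j : 'I_n) (x : V) (cs : 'I_n -> D) :
  j \in S -> supp S cs -> x = lcomb act b0 cs -> cs j != 0 ->
  (forall k, cs k != 0 -> nu (cs j) <= nu (cs k)) ->
  (forall w, spanS S w -> w != 0 -> phi' w <= phi' x) ->
  QS (S :\ j) -> QS S.
Proof.
move=> jS hcs ex hcj hmin hmax [u'' [al'' [be'' [Q1 Q2 Q3 Q4]]]].
set S' := S :\ j.
have hx : x != 0.
  apply/eqP => x0; move/eqP: hcj; apply.
  by apply: (basis_indep hb0); rewrite -ex.
have coordP0 : forall dj e r, supp S' e ->
    (P0' r (act x dj + lcomb act b0 e) <-> P0' r (act x dj) /\ P0' r (lcomb act b0 e)).
  move=> dj e r he; split; last by case=> h1 h2; apply: (L_add hnu hV hP0').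
  move=> h.
  have hxd : P0' r (act x dj).
    rewrite ex (lcomb_act hV) /P0' (P0_coord nu hV hb0) => k.
    move: h; rewrite ex (lcomb_act hV) -(lcombD hV) /P0' (P0_coord nu hV hb0) => /(_ j).
    rewrite (he j); last by rewrite !inE eqxx.
    rewrite addr0 => hj.
    have [ck0|ckn] := eqVneq (cs k) 0; first by rewrite ck0 mul0r; left.
    have [d0|dn] := eqVneq dj 0; first by rewrite d0 mulr0; left.
    right; move: hj; rewrite (vge_nz _ _ (mulD_neq0 hdiv hcj dn)) (nuM hnu) //.
    rewrite (nuM hnu) //; have := hmin k ckn; lra.
  split => //; have := L_sub hnu hV hP0' h hxd.
  by rewrite [act x dj + _]addrC addrK.
have coordL : forall dj e r, supp S' e ->
    (Lam r (act x dj + lcomb act b0 e) <-> Lam r (act x dj) /\ Lam r (lcomb act b0 e)).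
  move=> dj e r he; split; last by case=> h1 h2; apply: (L_add hnu hV hL).
  move=> h.
  suff hxd : Lam r (act x dj).
    split => //; have := L_sub hnu hV hL h hxd.
    by rewrite [act x dj + _]addrC addrK.
  apply: NNPP => hn.
  have dn : dj != 0.
    by apply/eqP => d0; apply: hn; rewrite d0 (act0r hV); apply: (L0 hV hL).
  set y := act x dj + lcomb act b0 e.
  have ey : y = lcomb act b0 (fun k => cs k * dj + e k).
    by rewrite /y ex (lcomb_act hV) -(lcombD hV).
  have yn : y != 0.
    apply/eqP => y0.
    have := basis_indep hb0 (etrans (esym ey) y0) j.
    rewrite (he j); last by rewrite !inE eqxx.
    by rewrite addr0 => /eqP; apply/negP; apply: mulD_neq0.
  have yS : spanS S y.
    exists (fun k => cs k * dj + e k); split => // k hk.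
    rewrite hcs // he ?mul0r ?addr0 //.
    by rewrite !inE negb_and hk orbT.
  have hphi := hmax y yS yn.
  have ry : r <= om Lam y by rewrite -(omsp hL yn).
  have xdn : act x dj != 0 := act_neq0 hdiv hV hx dn.
  have lt1 : om Lam (act x dj) < r.
    case: (lerP r (om Lam (act x dj))) => // hh; exfalso; apply: hn.
    by rewrite (omsp hL xdn).
  have le0 : om P0' y <= om P0' (act x dj).
    have := omin hP0' yn; rewrite /y (coordP0 _ _ _ he) => -[h1 _].
    by rewrite -(omsp hP0' xdn).
  have hsc := phi_scale hnu hdiv hp hV hb0 hL hx dn.
  move: hphi hsc; rewrite /phi' /phi -/P0'; lra.
set u' := fun k => if k == j then x else u'' k.
set al' := fun k => if k == j then om Lam x else al'' k.
set be' := fun k => if k == j then om P0' x else be'' k.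
have dsupp : forall d, supp S d -> supp S' (fun k => if k == j then 0 else d k).
  move=> d hd k; rewrite !inE negb_and negbK.
  by case: (eqVneq k j) => //= _ hk; apply: hd.
exists u', al', be'; split.
- move=> d hd; rewrite lcomb_upd.
  have [e [he ->]] := Q1 _ (dsupp d hd).
  exists (fun k => cs k * d j + e k); split.
    move=> k hk; rewrite hcs // he ?mul0r ?addr0 //.
    by rewrite !inE negb_and hk orbT.
  by rewrite ex (lcomb_act hV) -(lcombD hV).
- move=> c hc.
  set q := (cs j)^-1 * c j.
  set e := fun k => c k - cs k * q.
  have he : supp S' e.
    move=> k; rewrite !inE negb_and negbK /e.
    case: (eqVneq k j) => [->|_] /= hk.
      by rewrite /q mulrA mulrV ?mul1r ?subrr // hdiv.
    by rewrite hc // hcs // mul0r subrr.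
  have [d'' [hd'' ed'']] := Q2 e he.
  have d''j : d'' j = 0 by apply: hd''; rewrite !inE eqxx.
  exists (fun k => if k == j then q else d'' k); split.
    move=> k hk; have kj : k != j by apply: contraNneq hk => ->.
    rewrite (negbTE kj); apply: hd''; by rewrite !inE negb_and hk orbT.
  rewrite lcomb_upd eqxx.
  rewrite (lcomb_ext act u'' (e := d'')); last first.
    by move=> k /=; case: (eqVneq k j) => [->|_] //.
  rewrite -ed'' ex (lcomb_act hV) -(lcombD hV); apply: lcomb_ext => k /=.
  by rewrite /e addrC subrK.
- move=> d r hd; rewrite lcomb_upd.
  have [e [he ee]] := Q1 _ (dsupp d hd).
  rewrite ee (coordL _ _ _ he) -ee (scal_norm hL _ _ hx) (Q3 _ r (dsupp d hd)).
  split.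
    case=> h1 h2 k hk; rewrite /al'; case: (eqVneq k j) => [->|kj] //.
    by have := h2 k; rewrite !inE kj hk (negbTE kj) => /(_ isT).
  move=> h; split; first by have := h j jS; rewrite /al' eqxx.
  move=> k; rewrite !inE => /andP [kj hk]; rewrite (negbTE kj).
  by have := h k hk; rewrite /al' (negbTE kj).
- move=> d r hd; rewrite lcomb_upd.
  have [e [he ee]] := Q1 _ (dsupp d hd).
  rewrite ee (coordP0 _ _ _ he) -ee (scal_norm hP0' _ _ hx) (Q4 _ r (dsupp d hd)).
  split.
    case=> h1 h2 k hk; rewrite /be'; case: (eqVneq k j) => [->|kj] //.
    by have := h2 k; rewrite !inE kj hk (negbTE kj) => /(_ isT).
  move=> h; split; first by have := h j jS; rewrite /be' eqxx.
  move=> k; rewrite !inE => /andP [kj hk]; rewrite (negbTE kj).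
  by have := h k hk; rewrite /be' (negbTE kj).
Qed.

Lemma QS_all N : forall S : {set 'I_n}, (#|S| <= N)%N -> QS S.
Proof.
elim: N => [|N ih] S hS.
  by move: hS; rewrite leqn0 cards_eq0 => /eqP ->; apply: QS0.
have [->|/set0Pn [j0 hj0]] := eqVneq S set0; first exact: QS0.
pose del := fun k : 'I_n => if k == j0 then (1 : D) else 0.
have w0S : spanS S (lcomb act b0 del).
  exists del; split => // k hk; rewrite /del; case: (eqVneq k j0) => // e.
  by move: hk; rewrite e hj0.
have w0n : lcomb act b0 del != 0.
  apply/eqP => h; have := basis_indep hb0 h j0; rewrite /del eqxx.
  by move/eqP; rewrite oner_eq0.
have [x [[cs [hcs ex]] hxn hmax]] := phi_max hnu hdiv hp hV hb0 hL (ex_intro _ _ (conj w0S w0n)).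
have [k1 hk1] : exists k1, cs k1 != 0.
  apply: NNPP => hno; move/eqP: hxn; apply; rewrite ex.
  rewrite (lcomb_ext act b0 (e := fun _ => 0)) ?(lcomb0 hV) // => k /=.
  by apply: NNPP => hk; apply: hno; exists k; apply/eqP.
have [j [hj hjmin]] := @fin_argmin n (fun k => cs k != 0) (fun k => nu (cs k)) k1 hk1.
have jS : j \in S by apply: contraT => hjS; move: hj; rewrite hcs // eqxx.
apply: (QS_step jS hcs ex hj hjmin hmax).
apply: ih; move: hS; rewrite (cardsD1 j S) jS /= add1n ltnS.
by [].
Qed.

Lemma E_main : exists (u : 'I_n -> V) (al be : 'I_n -> RR),
  [/\ is_basis act u, splits nu act Lam u al & splits nu act P0' u be].
Proof.
have [u [al [be [Q1 Q2 Q3 Q4]]]] := @QS_all #|[set: 'I_n]| setT (leqnn _).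
have sT : forall d, supp setT d by move=> d k; rewrite inE.
have hu : is_basis act u.
  split.
    move=> v; have [c ec] := hb0.1 v.
    by have [d [_ e]] := Q2 c (sT c); exists d; rewrite ec e.
  move=> d hd k; apply: (@vge_all _ nu) => r.
  have := (Q3 d (r + al k) (sT d)).1; rewrite hd => /(_ (L0 hV hL _) k (in_setT k)).
  by rewrite addrK.
have spl : forall (Lm : RR -> V -> Prop) (ga : 'I_n -> RR),
    (forall d r, supp setT d -> (Lm r (lcomb act u d) <->
      forall k, k \in setT -> vge nu (r - ga k) (d k))) ->
    splits nu act Lm u ga.
  move=> Lm ga hQ x v; split.
    move=> h; have [d ed] := hu.1 v; exists d; split => //.
    by move=> k; move: h; rewrite ed (hQ d x (sT d)) => /(_ k (in_setT k)).
  case=> d [hd ->]; apply/(hQ d x (sT d)) => k _; exact: hd.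
exists u, al, be; split => //; apply: spl.
  exact: Q3.
exact: Q4.
Qed.

End Q.


Lemma main_gen (D : unitRingType) (nu : D -> RR) (hnu : valuation nu)
  (hdiv : forall x : D, x != 0 -> x \is a GRing.unit)
  (p : D) (hp : uniformizer nu p)
  (V : zmodType) (act : V -> D -> V) (hV : right_module act)
  (hfd : finite_dim act)
  (a : (RR -> V -> Prop) -> RR) (haff : affine_functional nu p act a)
  (c : D) (hc : c != 0) (hnc : nu c != 0)
  (hinv : forall Lam, lattice_fun nu p act Lam -> a (scal_fun act c Lam) = a Lam) :
  exists C : RR, forall Lam, lattice_fun nu p act Lam -> a Lam = C.
Proof.
have [n [b0 hb0]] := hfd.
exists (a (P0 nu act b0)) => Lam hL.
have [u [al [be [hu s1 s2]]]] := E_main hnu hdiv hp hV hb0 hL.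
rewrite (pred_ext s1) (pred_ext s2).
exact: (gg_const hnu hdiv hp hV haff hc hnc hinv hu al be).
Qed.

Unset Implicit Arguments.

Theorem mainTheorem10
  (k : fieldType) (nu : k -> RR)
  (hk : nonarch_local_field nu) (h2 : residue_char_not2 nu) :
  (* (1) general case: central division algebra D, right D-space V *)
  (forall (D : falgType k)
          (hdiv : forall x : D, x != 0 -> x \is a GRing.unit)
          (hcent : forall x : D, (forall y : D, x * y = y * x) ->
                     exists c : k, x = c%:A)
          (nuD : D -> RR)
          (hnuD : valuation nuD)
          (hext : forall c : k, c != 0 -> nuD (c%:A) = nu c)
          (piD : D) (hpi : uniformizer nuD piD)
          (V : zmodType) (act : V -> D -> V)
          (hV : right_module act) (hfd : finite_dim act)
          (a : (RR -> V -> Prop) -> RR),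
      affine_functional nuD piD act a ->
      (forall (c : k) (Lam : RR -> V -> Prop), c != 0 ->
          lattice_fun nuD piD act Lam ->
          a (scal_fun act (c%:A) Lam) = a Lam) ->
      exists C : RR, forall Lam, lattice_fun nuD piD act Lam -> a Lam = C)
  /\
  (* (2) building of O^{is}_2 identified with Latt^1_{o_k}(k) *)
  (forall (pik : k) (hpik : uniformizer nu pik)
          (a : (RR -> k -> Prop) -> RR),
      affine_functional nu pik ( *%R) a ->
      (forall (c : k) (Lam : RR -> k -> Prop), c != 0 ->
          lattice_fun nu pik ( *%R) Lam ->
          a (scal_fun ( *%R) c Lam) = a Lam) ->
      exists C : RR, forall Lam, lattice_fun nu pik ( *%R) Lam -> a Lam = C).
Proof.
case: hk => [[hnu [e [e0 [_ [x0 [hx0 hnx0]]]]]] _ _].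
have hnx : nu x0 != 0 by rewrite hnx0 gt_eqF.
split.
  move=> D hdiv hcent nuD hnuD hext piD hpi V act hV hfd a haff hinv.
  have hc : x0%:A != 0 :> D by rewrite scaler_eq0 negb_or hx0 oner_neq0.
  apply: (main_gen hnuD hdiv hpi hV hfd haff hc _ (fun Lam => hinv x0 Lam hx0)).
  by rewrite hext.
move=> pik hpik a haff hinv.
have hdiv : forall x : k, x != 0 -> x \is a GRing.unit by move=> x; rewrite unitfE.
have hV : right_module ( *%R : k -> k -> k).
  split => *; [exact: mulrDl | exact: mulrDr | exact: mulrA | exact: mulr1].
have hfd : finite_dim ( *%R : k -> k -> k).
  exists 1%N, (fun _ => 1); split.
    move=> v; exists (fun _ => v); by rewrite /lcomb big_ord1 mul1r.
  move=> d; rewrite /lcomb big_ord1 mul1r => h i.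
  by rewrite (ord1 i).
exact: (main_gen hnu hdiv hpik hV hfd haff hx0 hnx (fun Lam => hinv x0 Lam hx0)).
Qed.
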